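(* Let $\Sigma=I_d$, $\beta_*\in\mathbb{R}^d$, $\sigma^2\ge0$, $\lambda>0$, and let $\lambda_*>0$ be the solution of $n-\lambda/\lambda_*=\frac{d}{1+\lambda_*}$. Define $$\mathsf{R}_\lambda:=\frac{\lambda_*^2\langle\beta_*,\Sigma(\Sigma+\lambda_*I)^{-2}\beta_*\rangle}{1-n^{-1}\operatorname{Tr}(\Sigma^2(\Sigma+\lambda_*I)^{-2})}+\frac{\sigma^2\operatorname{Tr}(\Sigma^2(\Sigma+\lambda_*I)^{-2})}{n-\operatorname{Tr}(\Sigma^2(\Sigma+\lambda_*I)^{-2})},$$ $$\mathsf{N}_\lambda:=\langle\beta_*,\Sigma^2(\Sigma+\lambda_*I)^{-2}\beta_*\rangle+\frac{\operatorname{Tr}(\Sigma(\Sigma+\lambda_*I)^{-2})}{n}\cdot\frac{\lambda_*^2\langle\beta_*,\Sigma(\Sigma+\lambda_*I)^{-2}\beta_*\rangle}{1-n^{-1}\operatorname{Tr}(\Sigma^2(\Sigma+\lambda_*I)^{-2})}+\frac{\sigma^2\operatorname{Tr}(\Sigma(\Sigma+\lambda_*I)^{-2})}{n-\operatorname{Tr}(\Sigma^2(\Sigma+\lambda_*I)^{-2})}.$$ Then $$\big(\|\beta_*\|_2^2-\mathsf{R}_\lambda-\mathsf{N}_\lambda\big)\big(\|\beta_*\|_2^2+\mathsf{R}_\lambda-\mathsf{N}_\lambda\big)^2d+2\|\beta_*\|_2^2\Big(\big(\|\beta_*\|_2^2+\mathsf{R}_\lambda-\mathsf{N}_\lamb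da\big)^2-4\|\beta_*\|_2^2\mathsf{R}_\lambda\Big)\lambda=2\Big(\big(\mathsf{R}_\lambda-\mathsf{N}_\lambda\big)^2-\|\beta_*\|_2^4\Big)d\sigma^2.$$
   Context: $\mathsf{R}_\lambda$ and $\mathsf{N}_\lambda$ are the deterministic equivalents of the test risk $\mathbb{E}_\varepsilon\|\beta_*-\hat\beta\|_\Sigma^2$ and the squared norm $\mathbb{E}_\varepsilon\|\hat\beta\|_2^2$ of the ridge estimator $\hat\beta=(X^{\top}X+\lambda I)^{-1}X^{\top}y$ in linear regression with $n$ samples, feature covariance $\Sigma$, target $\beta_*$ and noise variance $\sigma^2$; they are defined by the formulas in the claim. *)

(* Defs.v *)
From mathcomp Require Import all_boot all_order all_algebra.
Set Implicit Arguments. Unset Strict Implicit. Unset Printing Implicit Defensive.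
Import Order.TTheory GRing.Theory Num.Theory.
Local Open Scope ring_scope.

Section Ridge.
Variable R : realFieldType.

Definition inner (d : nat) (u : 'cV[R]_d) (M : 'M[R]_d) (v : 'cV[R]_d) : R :=
  (u^T *m M *m v) 0 0.

Definition sqnorm (d : nat) (b : 'cV[R]_d) : R := \sum_(i < d) b i 0 ^+ 2.

Definition resolv2 (d : nat) (Sigma : 'M[R]_d) (lamstar : R) : 'M[R]_d :=
  invmx ((Sigma + lamstar%:M) *m (Sigma + lamstar%:M)).

Definition df2 (d : nat) (Sigma : 'M[R]_d) (lamstar : R) : R :=
  \tr (Sigma *m Sigma *m resolv2 Sigma lamstar).

Definition df1 (d : nat) (Sigma : 'M[R]_d) (lamstar : R) : R :=
  \tr (Sigma *m resolv2 Sigma lamstar).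

Definition ridgeR (n d : nat) (Sigma : 'M[R]_d) (beta : 'cV[R]_d)
    (sigma2 lamstar : R) : R :=
  lamstar ^+ 2 * inner beta (Sigma *m resolv2 Sigma lamstar) beta
    / (1 - (n%:R)^-1 * df2 Sigma lamstar)
  + sigma2 * df2 Sigma lamstar / (n%:R - df2 Sigma lamstar).

Definition ridgeN (n d : nat) (Sigma : 'M[R]_d) (beta : 'cV[R]_d)
    (sigma2 lamstar : R) : R :=
  inner beta (Sigma *m Sigma *m resolv2 Sigma lamstar) beta
  + df1 Sigma lamstar / n%:R *
      (lamstar ^+ 2 * inner beta (Sigma *m resolv2 Sigma lamstar) beta
         / (1 - (n%:R)^-1 * df2 Sigma lamstar))
  + sigma2 * df1 Sigma lamstar / (n%:R - df2 Sigma lamstar).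

End Ridge.

(* Main.v *)
Require Import Defs.
From mathcomp Require Import all_boot all_order all_algebra.
From mathcomp Require Import ring lra.
Import Order.TTheory GRing.Theory Num.Theory.
Local Open Scope ring_scope.

Lemma resolv2_id (R : realFieldType) (d : nat) (t : R) :
  resolv2 (1%:M : 'M[R]_d) t = (((1 + t) * (1 + t))^-1)%:M.
Proof.
rewrite /resolv2 -invmx_scalar scalar_mxM.
have -> : (1 + t)%:M = (1%:M + t%:M : 'M[R]_d) by apply/matrixP => i j; rewrite !mxE mulrnDl.
by [].
Qed.

Lemma inner_scal (R : realFieldType) (d : nat) (b : 'cV[R]_d) (c : R) :
  inner b c%:M b = c * sqnorm b.
Proof.
rewrite /inner mul_mx_scalar -scalemxAl mxE /sqnorm mxE; congr (_ * _).
by apply: eq_bigr => i _; rewrite !mxE expr2.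
Qed.

Lemma key (F : fieldType) (t lam D N B s : F)
  (ht : t != 0) (ha : 1 + t != 0) 
  (hE0 : lam * (1 + t) + D * t != 0)
  (hE1 : lam * (1 + t) * (1 + t) + D * t * t != 0)
  (hN : N = lam / t + D / (1 + t)) :
  let Rl := t ^+ 2 * (B / ((1 + t) * (1 + t))) / (1 - N^-1 * (D / ((1 + t) * (1 + t))))
     + s * (D / ((1 + t) * (1 + t))) / (N - D / ((1 + t) * (1 + t))) in
  let Nl := B / ((1 + t) * (1 + t)) + D / ((1 + t) * (1 + t)) / N *
      (t ^+ 2 * (B / ((1 + t) * (1 + t))) / (1 - N^-1 * (D / ((1 + t) * (1 + t)))))
     + s * (D / ((1 + t) * (1 + t))) / (N - D / ((1 + t) * (1 + t))) in
  (B - Rl - Nl) * (B + Rl - Nl) ^+ 2 * D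
  + 2 * B * ((B + Rl - Nl) ^+ 2 - 4 * B * Rl) * lam
  = 2 * ((Rl - Nl) ^+ 2 - B ^+ 2) * D * s.
Proof.
move=> Rl Nl; rewrite /Rl /Nl hN.
field.
rewrite ha ht hE0 /=.
have -> : (lam * (1 + t) + D * t) * (1 + t) + - D * t = lam * (1 + t) * (1 + t) + D * t * t by ring.
by rewrite hE1.
Qed.

Theorem proposition12 (R : realFieldType) (n d : nat) (beta : 'cV[R]_d)
    (sigma2 lam lamstar : R)
    (hsigma : 0 <= sigma2) (hlam : 0 < lam) (hlamstar : 0 < lamstar)
    (hfix : n%:R - lam / lamstar = d%:R / (1 + lamstar)) :
  let Sigma : 'M[R]_d := 1%:M in
  let B := sqnorm beta in
  let Rl := ridgeR n Sigma beta sigma2 lamstar in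
  let Nl := ridgeN n Sigma beta sigma2 lamstar in
  (B - Rl - Nl) * (B + Rl - Nl) ^+ 2 * d%:R
  + 2 * B * ((B + Rl - Nl) ^+ 2 - 4 * B * Rl) * lam
  = 2 * ((Rl - Nl) ^+ 2 - B ^+ 2) * d%:R * sigma2.
Proof.
move=> Sigma B Rl Nl.
set t := lamstar.
set D := (d%:R : R).
set N := (n%:R : R).
have ht1 : 0 < 1 + t by rewrite addr_gt0.
have ha : 1 + t != 0 by rewrite lt0r_neq0.
have ht : t != 0 by rewrite lt0r_neq0.
have hD : 0 <= D by rewrite /D ler0n.
have hN : N = lam / t + D / (1 + t) by rewrite -hfix; ring.
have hdf : df2 Sigma t = D / ((1 + t) * (1 + t)).
  by rewrite /df2 /Sigma mul1mx mul1mx resolv2_id mxtrace_scalar -mulr_natr mulrC.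
have hdf1 : df1 Sigma t = D / ((1 + t) * (1 + t)).
  by rewrite /df1 /Sigma mul1mx resolv2_id mxtrace_scalar -mulr_natr mulrC.
have hi1 : inner beta (Sigma *m resolv2 Sigma t) beta = B / ((1 + t) * (1 + t)).
  by rewrite /Sigma mul1mx resolv2_id inner_scal mulrC.
have hi2 : inner beta (Sigma *m Sigma *m resolv2 Sigma t) beta = B / ((1 + t) * (1 + t)).
  by rewrite /Sigma !mul1mx resolv2_id inner_scal mulrC.
have hE0 : lam * (1 + t) + D * t != 0.
  apply: lt0r_neq0; apply: ltr_pwDl; first by apply: mulr_gt0.
  by apply: mulr_ge0 => //; apply: ltW.
have hE1 : lam * (1 + t) * (1 + t) + D * t * t != 0.
  apply: lt0r_neq0; apply: ltr_pwDl; first by apply: mulr_gt0 => //; apply: mulr_gt0.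
  by apply: mulr_ge0; [apply: mulr_ge0 => //; exact: ltW | exact: ltW].
rewrite /Rl /Nl /ridgeR /ridgeN hdf hdf1 hi1 hi2 -/N.
exact: (@key R t lam D N B sigma2 ht ha hE0 hE1 hN).
Qed.
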